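(* Let $S(A)=(a_n)$ be an independent Stanley sequence with character $\lambda$. Let $\ell$ be the minimum adequate integer for $S(A)$, and let $k\ge \ell$. Let $c$ be an integer with $$\lambda\le c\le a_{2^k-2^\ell}-\lambda.$$ Then the set $$A_k(c,A)=\{a_i\mid 0\le i<2^k\}\cup\{c+a_i\mid 2^k\le i<2^{k+1}\}$$ is 3-free, and the Stanley sequence $S_k(c,A)=S(A_k(c,A))$ is a regular Stanley sequence with core $S(A)$.
   Context: A set of non-negative integers is 3-free if no three of its elements form an arithmetic progression. For a finite 3-free set $A=\{a_0<\cdots<a_k\}$ of non-negative integers, the Stanley sequence $S(A)=(a_n)_{n\ge0}$ is the increasing sequence with initial terms $a_0,\ldots,a_k$ in which each subsequent $a_{n+1}$ is the smallest integer greater than $a_n$ such that $\{a_0,\ldots,a_{n+1}\}$ is 3-free. Throughout, Stanley sequences are in root position ($a_0=0$). A finite set $A'$ with $S(A')=S(A)$ is a nucleating set; a minimal nucleating set is one of minimal cardinality. A Stanley sequence $(a_n)$ is independent with character $\lambda$ if for all sufficiently large $k$: $a_{2^k+i}=a_{2^k}+a_i$ for $0\le i<2^k$, and $a_{2^k}=2a_{2^k-1}-\lambda+1$. An integer $k_0$ is adequate for an independent $S(A)$ if (i) these equations hold for all $k\ge k_0$ and (ii) $a_{2^{k_0}}$ is not contained in the minimal nucleating set of $S(A)$. A Stanley sequence $(b_n)$ is regular with core $(a'_n)$ if there exist constants $\lambda,\sigma$ and an independent Stanley sequence $(a'_n)$ of character $\lambda$ such that for all large $k$ and $0\le i<2^k$: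 $b_{2^k-\sigma+i}=b_{2^k-\sigma}+a'_i$ and $b_{2^k-\sigma}=2b_{2^k-\sigma-1}-\lambda+1$ (such data are unique). *)

(* Defs.v *)
From mathcomp Require Import all_boot all_order all_algebra.
Set Implicit Arguments. Unset Strict Implicit. Unset Printing Implicit Defensive.

Definition three_free (s : seq nat) : Prop :=
  forall x y z, x \in s -> y \in s -> z \in s -> x < y -> y < z ->
    x + z <> 2 * y.

Definition prefix (a : nat -> nat) (n : nat) : seq nat := map a (iota 0 n).

(* [stanley A a] : the sequence a is the Stanley sequence S(A), in root
   position (a_0 = 0). *)
Definition stanley (A : seq nat) (a : nat -> nat) : Prop :=
  [/\ uniq A, three_free A, a 0 = 0,
      (forall i, i < size A -> a i = nth 0 (sort leq A) i) &
      (forall n, size A <= n.+1 ->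
         [/\ a n < a n.+1,
             three_free (prefix a n.+2) &
             forall m, a n < m -> m < a n.+1 ->
               ~ three_free (rcons (prefix a n.+1) m)])].

Definition nucleating (a : nat -> nat) (A' : seq nat) : Prop := stanley A' a.

Definition minimal_nucleating (a : nat -> nat) (A' : seq nat) : Prop :=
  nucleating a A' /\ forall B, nucleating a B -> size A' <= size B.

(* The independence equations at level k, with character lam:
   a_{2^k+i} = a_{2^k} + a_i (0 <= i < 2^k) and
   a_{2^k} = 2 a_{2^k - 1} - lam + 1  (written without subtraction). *)
Definition indep_eqs (a : nat -> nat) (lam : nat) (k : nat) : Prop :=
  (forall i, i < 2 ^ k -> a (2 ^ k + i) = a (2 ^ k) + a i) /\
  a (2 ^ k) + lam = 2 * a (2 ^ k - 1) + 1.

Definition independent (a : nat -> nat) (lam : nat) : Prop :=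
  exists K, forall k, K <= k -> indep_eqs a lam k.

Definition adequate (a : nat -> nat) (lam : nat) (k0 : nat) : Prop :=
  (forall k, k0 <= k -> indep_eqs a lam k) /\
  (forall A', minimal_nucleating a A' -> a (2 ^ k0) \notin A').

Definition min_adequate (a : nat -> nat) (lam : nat) (l : nat) : Prop :=
  adequate a lam l /\ forall k0, adequate a lam k0 -> l <= k0.

(* the index 2^k - sigma, for an integer constant sigma (meaningful for
   large k, where 2^k > sigma). *)
Definition shifted (k : nat) (sigma : int) : nat :=
  absz ((Posz (2 ^ k) - sigma)%R).

Definition regular_with_core (b a' : nat -> nat) : Prop :=
  exists (lam : nat) (sigma : int),
    independent a' lam /\
    exists K, forall k, K <= k ->
      (0 < Posz (2 ^ k) - sigma)%R /\
      (forall i, i < 2 ^ k ->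
         b (shifted k sigma + i) = b (shifted k sigma) + a' i) /\
      b (shifted k sigma) + lam = 2 * b (shifted k sigma - 1) + 1.

Definition Akc (a : nat -> nat) (k c : nat) : seq nat :=
  prefix a (2 ^ k) ++ [seq c + a i | i <- iota (2 ^ k) (2 ^ k)].

(* Main.v *)
Require Import Defs.
From mathcomp Require Import all_boot all_order all_algebra.
From mathcomp Require Import zify.
From Stdlib Require Import Classical.
Set Implicit Arguments. Unset Strict Implicit.


Definition HypT (a : nat -> nat) (lam l : nat) : Prop :=
 [/\ (forall i j, i < j -> a i < a j),
     a 0 = 0,
     (forall p q r, p < q -> q < r -> a p + a r <> 2 * a q),
     (forall z, a (2^l - 1) < z -> (forall i, a i <> z) ->
        exists p q, p < q /\ 2 * a q = z + a p) &
     (forall j, l <= j -> indep_eqs a lam j)].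


Lemma hinc a lam l : HypT a lam l -> forall i j, i < j -> a i < a j.
Proof. by case. Qed.
Lemma ha0 a lam l : HypT a lam l -> a 0 = 0.
Proof. by case. Qed.
Lemma hfree a lam l : HypT a lam l -> forall p q r, p < q -> q < r -> a p + a r <> 2 * a q.
Proof. by case. Qed.
Lemma hcov a lam l : HypT a lam l -> forall z, a (2^l - 1) < z -> (forall i, a i <> z) ->
        exists p q, p < q /\ 2 * a q = z + a p.
Proof. by case. Qed.
Lemma hblk a lam l j i : HypT a lam l -> l <= j -> i < 2^j -> a (2^j + i) = a (2^j) + a i.
Proof. by case=> _ _ _ _ H lj; case: (H j lj) => H1 _; apply: H1. Qed.
Lemma hlam a lam l j : HypT a lam l -> l <= j -> a (2^j) + lam = 2 * a (2^j - 1) + 1.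
Proof. by case=> _ _ _ _ H lj; case: (H j lj). Qed.

Lemma hlee a lam l i j : HypT a lam l -> i <= j -> a i <= a j.
Proof. move=> H; rewrite leq_eqVlt => /orP [/eqP->//|/(hinc H)]; lia. Qed.
Lemma hlt a lam l i j : HypT a lam l -> a i < a j -> i < j.
Proof. move=> H aij; case: (ltnP i j) => // /(hlee H); lia. Qed.
Lemma hle a lam l i j : HypT a lam l -> a i <= a j -> i <= j.
Proof. move=> H aij; case: (ltnP j i) => // /(hinc H); lia. Qed.
Lemma hge a lam l n : HypT a lam l -> n <= a n.
Proof. move=> H; elim: n => [|n IH]; first lia. have := hinc H (ltnSn n); lia. Qed.

Lemma pow_pos j : 0 < 2 ^ j. Proof. by rewrite expn_gt0. Qed.
Lemma powS j : 2 ^ j.+1 = 2^j + 2^j. Proof. rewrite expnS; lia. Qed.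
Lemma pow_le i j : i <= j -> 2 ^ i <= 2 ^ j. Proof. by move=> h; rewrite leq_exp2l. Qed.

Lemma hmS a lam l j : HypT a lam l -> l <= j ->
  a (2^j.+1 - 1) = a (2^j) + a (2^j - 1).
Proof. move=> H lj; have := pow_pos j; rewrite powS => p.
have -> : 2^j + 2^j - 1 = 2^j + (2^j - 1) by lia.
by apply: (hblk H) => //; lia. Qed.

Lemma hlam_le a lam l : HypT a lam l -> lam <= a (2^l - 1).
Proof. move=> H; have := hlam H (leqnn l); have := pow_pos l => p.
have := @hinc _ _ _ H (2^l - 1) (2^l); lia. Qed.

Lemma hm_mono a lam l j j' : HypT a lam l -> j' <= j -> a (2^j' - 1) <= a (2^j - 1).
Proof. move=> H h; apply: (hlee H); have := pow_le h; lia. Qed.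

Lemma hmlarge a lam l J : HypT a lam l -> l < J -> a (2^l - 1) + lam < a (2^J - 1) + 1.
Proof. move=> H lJ; have := hm_mono H lJ; rewrite (hmS H (leqnn l)).
have := hlam H (leqnn l); have := hlam_le H; lia. Qed.

Lemma hloc a lam l z : HypT a lam l -> exists n, a n <= z < a n.+1.
Proof. move=> H.
suff: forall N, z < a N -> exists n, a n <= z < a n.+1.
  move=> /(_ z.+1) HN; apply: HN; have := hge z.+1 H; lia.
elim=> [|N IH]; first by rewrite (ha0 H).
case: (ltnP z (a N)) => [/IH//|h1 h2]; by exists N; apply/andP. Qed.


Lemma hnotin_blk a lam l j w : HypT a lam l -> l <= j -> w <= a (2^j - 1) ->
  (forall i, a i <> w) -> forall i, a i <> a (2^j) + w.
Proof. move=> H lj hw hn i ai.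
have := pow_pos j => pj.
have h1 : 2^j <= i by apply: (hle H); lia.
have h2 : i <= 2^j.+1 - 1 by apply: (hle H); rewrite (hmS H lj); lia.
have E : i = 2^j + (i - 2^j) by lia.
move: ai; rewrite E (hblk H lj); last by rewrite powS in h2; lia.
move=> e; apply: (hn (i - 2^j)); lia. Qed.

Lemma hN a lam l j w : HypT a lam l -> l <= j -> lam <= w -> w < a (2^j) ->
  exists u v, [/\ u < 2^j, v < 2^j.+1 & 2 * a u + a (2^j) = w + a v].
Proof. move=> H lj lw wM.
have := pow_pos j => pj. have ps := powS j.
case: (classic (exists i, a i = w)) => [[i Hi]|Hn].
  have iP : i < 2^j by apply: (hlt H); lia.
  exists i, (2^j + i); split; [done|lia|]. rewrite (hblk H lj iP); lia.
have Hn' : forall i, a i <> w by move=> i e; apply: Hn; exists i.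
case: (ltnP (a (2^j - 1)) w) => hw.
  have [p [q [pq E]]] := hcov H (leq_ltn_trans (hm_mono H lj) hw) Hn'.
  have apq := hinc H pq.
  have qP : q < 2^j by apply: (hlt H); lia.
  exists q, (2^j + p); split; [done|lia|]. rewrite (hblk H lj) //; [lia|lia].
have nz := hnotin_blk H lj hw Hn'.
have ml := hm_mono H lj. have mM : a (2^j - 1) < a (2^j) by apply: (hinc H); lia.
have hz : a (2^l - 1) < a (2^j) + w by lia.
have [p [q [pq E]]] := hcov H hz nz.
have apq := hinc H pq. have lm := hlam H lj.
case: (ltnP q (2^j)) => hq.
  have : a q <= a (2^j - 1) by apply: (hlee H); lia.
  lia.
have hq2 : q <= 2^j.+1 - 1 by apply: (hle H); rewrite (hmS H lj); lia.
have Eq : q = 2^j + (q - 2^j) by lia.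
move: E; rewrite Eq (hblk H lj); last lia.
move=> E; exists (q - 2^j), p; split; [lia|lia|lia]. Qed.

Lemma hPos1 a lam l j w : HypT a lam l -> l <= j -> w <= a (2^j - 1) ->
  exists u v, [/\ u < 2^j.+1, v < 2^j.+1 & 2 * a u = w + a v].
Proof. move=> H lj hw.
have := pow_pos j => pj. have ps := powS j.
case: (classic (exists i, a i = w)) => [[i Hi]|Hn].
  have : i <= 2^j - 1 by apply: (hle H); lia.
  move=> ii; exists i, i; split; [lia|lia|lia].
have Hn' : forall i, a i <> w by move=> i e; apply: Hn; exists i.
have nz := hnotin_blk H lj hw Hn'.
have ml := hm_mono H lj. have mM : a (2^j - 1) < a (2^j) by apply: (hinc H); lia.
have hz : a (2^l - 1) < a (2^j) + w by lia.
have [p [q [pq E]]] := hcov H hz nz.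
have apq := hinc H pq.
have hq2 : q <= 2^j.+1 - 1 by apply: (hle H); rewrite (hmS H lj); lia.
case: (ltnP p (2^j)) => hp.
  exists q, (2^j + p); split; [lia|lia|]. rewrite (hblk H lj hp); lia.
have Eq : q = 2^j + (q - 2^j) by lia.
have Ep : p = 2^j + (p - 2^j) by lia.
move: E; rewrite Eq Ep !(hblk H lj); [|lia|lia].
move=> E; exists (q - 2^j), (p - 2^j); split; [lia|lia|lia]. Qed.

Lemma hPos a lam l k w : HypT a lam l -> l < k -> w < a (2^k) ->
  exists u v, [/\ u < 2^k, v < 2^k & 2 * a u = w + a v].
Proof. move=> H lk hwk.
case: (classic (exists i, a i = w)) => [[i Hi]|Hn].
  have : i < 2^k by apply: (hlt H); lia.
  move=> ii; exists i, i; split; [lia|lia|lia].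
have Hn' : forall i, a i <> w by move=> i e; apply: Hn; exists i.
case: (ltnP (a (2^l - 1)) w) => hw.
  have [p [q [pq E]]] := hcov H hw Hn'.
  have apq := hinc H pq.
  have qP : q < 2^k by apply: (hlt H); lia.
  exists q, p; split; [done|lia|lia].
have [u [v [hu hv E]]] := hPos1 H (leqnn l) hw.
have : 2^l.+1 <= 2^k by apply: pow_le.
move=> hh; exists u, v; split; [lia|lia|lia]. Qed.

Lemma hNeg a lam l d r : HypT a lam l -> 0 < r -> r + lam <= a (2^(l + d) - 2^l) ->
  exists u v, [/\ u < 2^(l+d), v < 2^(l+d) & 2 * a u + r = a v].
Proof. move=> H; elim: d r => [|d IH] r r0.
  by rewrite addn0 subnn (ha0 H); lia.
rewrite addnS.
have lj : l <= l + d by lia.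
set j := l + d in IH lj *.
have := pow_pos j => pj. have ps := powS j.
have lp : 2^l <= 2^j by apply: pow_le.
have ES : a (2^j.+1 - 2^l) = a (2^j) + a (2^j - 2^l).
  have -> : 2^j.+1 - 2^l = 2^j + (2^j - 2^l) by lia.
  apply: (hblk H lj); have := pow_pos l; lia.
rewrite ES => hr.
case: (leqP (r + lam) (a (2^j - 2^l))) => h1.
  have [u [v [hu hv E]]] := IH r r0 h1.
  exists u, v; split; [lia|lia|lia].
case: (leqP (a (2^j)) r) => h2.
  case: (posnP (r - a (2^j))) => h3.
    exists 0, (2^j); split; [lia|lia|]. rewrite (ha0 H); lia.
  have h5 : r - a (2^j) + lam <= a (2^j - 2^l) by lia.
  have [u [v [hu hv E]]] := IH (r - a (2^j)) h3 h5.
  exists u, (2^j + v); split; [lia|lia|]. rewrite (hblk H lj hv); lia.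
case: (leqP (r + lam) (a (2^j))) => h4.
  have h5 : lam <= a (2^j) - r by lia.
  have h6 : a (2^j) - r < a (2^j) by lia.
  have [u [v [hu hv E]]] := hN H lj h5 h6.
  exists u, v; split; [lia|lia|lia].
case: (ltnP l j) => lj2; last first.
  have ejl : j = l by lia.
  move: h1 h4 hr; rewrite ejl subnn (ha0 H); lia.
have h6 : a (2^j) - r < a (2^j) by lia.
have [u [v [hu hv E]]] := hPos H lj2 h6.
exists u, (2^j + v); split; [lia|lia|]. rewrite (hblk H lj hv); lia. Qed.


Definition gg (k i : nat) : nat := if i < 2^k then 0 else 2^(trunc_log 2 i - k).
Definition bb (a : nat -> nat) (k c : nat) (i : nat) : nat := a i + c * gg k i.

Lemma gg_lo k i : i < 2^k -> gg k i = 0.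
Proof. by rewrite /gg => ->. Qed.

Lemma gg_lvl (k d i : nat) : 2^(k+d) <= i < 2^(k+d).+1 -> gg k i = (2 ^ d).
Proof. move=> /andP [h1 h2]; rewrite /gg.
have : 2^k <= 2^(k+d) by apply: pow_le; lia.
move=> h3; rewrite ltnNge (leq_trans h3 h1) /=.
by rewrite (trunc_log_eq (isT : 1 < 2) (_ : 2^(k+d) <= i < 2^(k+d).+1)) ?h1 ?h2 // addKn. Qed.

Lemma lvl_of i : 0 < i -> 2^(trunc_log 2 i) <= i < 2^(trunc_log 2 i).+1.
Proof. move=> i0; apply/andP; split; [exact: trunc_logP| exact: trunc_log_ltn]. Qed.

Lemma gg_small k R i : k <= R -> i < 2^R -> 2 * gg k i <= 2^(R - k).
Proof. move=> kR iR; rewrite /gg; case: ifP => [//|/negbT]; rewrite -leqNgt => ki.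
have i0 : 0 < i by have := pow_pos k; lia.
have /andP [h1 h2] := lvl_of i0.
set J := trunc_log 2 i in h1 h2 *.
have JR : J < R by rewrite -(ltn_exp2l _ _ (isT : 1 < 2)); lia.
have kJ : k <= J by rewrite -ltnS -(ltn_exp2l _ _ (isT : 1 < 2)); lia.
rewrite -expnS; apply: pow_le; lia. Qed.

Lemma gg_mono k i i' : i <= i' -> gg k i <= gg k i'.
Proof. move=> ii; rewrite /gg; case: ifP => // /negbT; rewrite -leqNgt => ki.
have ki' : 2^k <= i' by lia.
rewrite ltnNge ki' /=; apply: pow_le.
have := leq_trunc_log 2 ii; lia. Qed.

Lemma exp_sub_S k j : k <= j -> 2^(j.+1 - k) = 2 * 2^(j - k).
Proof. by move=> kj; rewrite subSn // expnS. Qed.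

Lemma hM3 a lam l j : HypT a lam l -> l <= j -> a (2^j.+1) = 3 * a (2^j).
Proof. move=> H lj; have := hlam H lj; have := hlam H (leqW lj).
rewrite (hmS H lj); lia. Qed.

Lemma hdelta a lam l k c (d : nat) : HypT a lam l -> l <= k -> c <= a (2^k) ->
  (c * 2 ^ d <= a (2 ^ (k + d)))%N.
Proof. move=> H lk ck; elim: d => [|d IH]; first by rewrite addn0 expn0 muln1.
rewrite addnS (hM3 H (_ : l <= k + d)); last lia.
rewrite expnS; lia. Qed.

Lemma bb_inc a lam l k c i j : HypT a lam l -> i < j -> bb a k c i < bb a k c j.
Proof. move=> H ij; rewrite /bb; have := hinc H ij.
have := gg_mono k (ltnW ij) => g; have : c * gg k i <= c * gg k j by rewrite leq_mul2l g orbT.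
lia. Qed.

Lemma bb_blk a lam l k c (d t : nat) : HypT a lam l -> l <= k -> t < 2^(k+d) ->
  (bb a k c (2^(k+d) + t) = a (2^(k+d)) + a t + c * 2 ^ d)%N.
Proof. move=> H lk td; rewrite /bb (hblk H _ td); last lia.
rewrite (gg_lvl (k:=k) (d:=d)) //; rewrite powS; apply/andP; split; lia. Qed.

Lemma bb_low a k c i : i < 2^k -> bb a k c i = a i.
Proof. by move=> h; rewrite /bb gg_lo // muln0 addn0. Qed.


Lemma mul_lt c x y : x < y -> c * x + c <= c * y.
Proof. move=> h; have : c * x.+1 <= c * y by rewrite leq_mul2l h orbT.
by rewrite mulnS; lia. Qed.

Lemma bb_free a lam l k c : HypT a lam l -> l <= k -> lam <= c ->
  forall p q r, p < q -> q < r -> bb a k c p + bb a k c r <> 2 * bb a k c q.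
Proof. move=> H lk lc p q r pq qr.
have F := hfree H pq qr.
case: (ltnP r (2^k)) => hr.
  rewrite !bb_low //; lia.
have r0 : 0 < r by have := pow_pos k; lia.
have /andP [h1 h2] := lvl_of r0.
set R := trunc_log 2 r in h1 h2.
have kR : k <= R by rewrite -ltnS -(ltn_exp2l _ _ (isT : 1 < 2)); lia.
have lR : l <= R by lia.
have gr : gg k r = 2^(R - k).
  apply: gg_lvl; rewrite subnKC //; apply/andP; split; lia.
have G1 : 0 < 2^(R-k) by apply: pow_pos.
have aru : a r <= a (2^R) + a (2^R - 1).
  rewrite -(hmS H lR); apply: (hlee H); lia.
have arl : a (2^R) <= a r by apply: (hlee H).
have lamR := hlam H lR.
rewrite /bb gr.
case: (ltnP q (2^R)) => hq.
  have aqu : a q <= a (2^R - 1) by apply: (hlee H); lia.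
  have gq := gg_small kR hq.
  have gp := gg_small kR (ltn_trans pq hq).
  case: (leqP (gg k p + 2^(R-k)) (2 * gg k q)) => hh.
    have gp0 : gg k p = 0 by lia.
    have gqe : 2 * gg k q = 2^(R-k) by lia.
    rewrite gp0 muln0 addn0 -gqe mulnCA => e; apply: F; lia.
  have := mul_lt c hh; rewrite mulnDr; lia.
have gq : gg k q = 2^(R-k).
  apply: gg_lvl; rewrite subnKC //; apply/andP; split; lia.
rewrite gq.
case: (ltnP p (2^R)) => hp.
  have apu : a p <= a (2^R - 1) by apply: (hlee H); lia.
  have gp := gg_small kR hp.
  have hh : gg k p < 2^(R-k) by lia.
  have := mul_lt c hh.
  have aql : a (2^R) <= a q by apply: (hlee H).
  lia.
have gp : gg k p = 2^(R-k).
  apply: gg_lvl; rewrite subnKC //; apply/andP; split; lia.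
rewrite gp; lia. Qed.

Lemma hW a lam l k c (d : nat) : HypT a lam l -> l < k -> lam <= c -> c + lam <= a (2^k - 2^l) ->
  (forall w, w < a (2^(k+d)) -> exists u p, [/\ u < 2^(k+d), p < 2^(k+d) & 2 * a u = w + bb a k c p]) /\
  (forall r, 0 < r -> r <= c * 2 ^ d -> exists u p, [/\ u < 2^(k+d), p < 2^(k+d) & 2 * a u + r = bb a k c p]).
Proof. move=> H lk lc cS.
have ck : c <= a (2^k).
  have : a (2^k - 2^l) <= a (2^k) by apply: (hlee H); lia.
  lia.
elim: d => [|d [IHp IHn]].
  rewrite addn0 expn0 muln1; split.
    move=> w hw; have [u [v [hu hv E]]] := hPos H lk hw.
    by exists u, v; rewrite bb_low.
  move=> r r0 rc.
  have e : k = l + (k - l) by lia.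
  have hr : r + lam <= a (2^(l + (k - l)) - 2^l) by rewrite -e; lia.
  have [u [v [hu hv E]]] := hNeg H r0 hr.
  rewrite -e in hu hv; by exists u, v; rewrite bb_low.
have lj : l < k + d by lia.
set j := k + d in IHp IHn lj *.
have pj := pow_pos j. have ps := powS j.
have BB := fun t => @bb_blk a lam l k c d t H (ltnW lk).
rewrite -/j in BB.
have M3 := hM3 H (ltnW lj).
have del := hdelta d H (ltnW lk) ck. rewrite -/j in del.
rewrite addnS -/j M3 ps (expnS 2 d).
split.
  move=> w hw.
  case: (ltnP w (a (2^j))) => h1.
    have [u [p [hu hp E]]] := IHp w h1.
    exists u, p; split; [lia|lia|done].
  case: (ltnP (w + c * 2 ^ d) (2 * a (2^j))) => h2.
    have h3 : w - a (2^j) + c * 2 ^ d < a (2^j) by lia.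
    have [u [v [hu hv E]]] := hPos H lj h3.
    exists (2^j + u), (2^j + v); split; [lia|lia|].
    rewrite BB // (hblk H (ltnW lj) hu); lia.
  case: (leqP (2 * a (2^j)) w) => h4.
    have h5 : w - 2 * a (2^j) < a (2^j) by lia.
    have [u [p [hu hp E]]] := IHp _ h5.
    exists (2^j + u), p; split; [lia|lia|].
    rewrite (hblk H (ltnW lj) hu); lia.
  have h5 : 0 < 2 * a (2^j) - w by lia.
  have h6 : 2 * a (2^j) - w <= c * 2 ^ d by lia.
  have [u [p [hu hp E]]] := IHn _ h5 h6.
  exists (2^j + u), p; split; [lia|lia|].
  rewrite (hblk H (ltnW lj) hu); lia.
move=> r r0 rd.
case: (leqP r (c * 2 ^ d)) => h1.
  have [u [p [hu hp E]]] := IHn r r0 h1.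
  exists u, p; split; [lia|lia|done].
have h3 : a (2^j) - (r - c * 2 ^ d) < a (2^j) by lia.
have [u [v [hu hv E]]] := hPos H lj h3.
exists u, (2^j + v); split; [lia|lia|].
rewrite BB //; lia. Qed.


Lemma notT_between a lam l n z : HypT a lam l -> a n < z -> z < a n.+1 -> forall i, a i <> z.
Proof. move=> H h1 h2 i e.
have := hlt H (_ : a n < a i); have := hlt H (_ : a i < a n.+1); lia. Qed.

Lemma bb_cover a lam l k c : HypT a lam l -> l <= k -> lam <= c -> c + lam <= a (2^k - 2^l) ->
  forall n z, 2^k.+1 <= n.+1 -> bb a k c n < z -> z < bb a k c n.+1 ->
  exists p q, [/\ p < q, q <= n & 2 * bb a k c q = z + bb a k c p].
Proof. move=> H lk lc cS n z nk hz1 hz2.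
have hlk : 2^l <= 2^k by apply: pow_le.
have hml : a (2^l - 1) <= a n.
  apply: (hlee H); have := powS k; lia.
case: (posnP c) => c0.
  have Eb : forall i, bb a k c i = a i by move=> i; rewrite /bb c0 mul0n addn0.
  rewrite !Eb in hz1 hz2 *.
  have [p [q [pq E]]] := hcov H (leq_ltn_trans hml hz1) (notT_between H hz1 hz2).
  have apq := hinc H pq.
  have qn : q < n.+1 by apply: (hlt H); lia.
  by exists p, q; split; rewrite ?Eb.
have lk2 : l < k.
  case: (ltngtP l k) => // e; [lia|]. move: cS; rewrite e subnn (ha0 H); lia.
have n1 : 0 < n.+1 by [].
have /andP [h1 h2] := lvl_of n1.
set J := trunc_log 2 n.+1 in h1 h2.
have kJ : k < J.
  have := trunc_log_max (isT : 1 < 2) nk; rewrite -/J; lia.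
have [d eJ] : exists d, J = (k + d).+1 by exists (J - k).-1; lia.
set j := k + d in eJ.
have lj : l < j by lia.
have pj := pow_pos j. have ps := powS j.
have BB := fun t => @bb_blk a lam l k c d t H (ltnW lk2).
rewrite -/j in BB.
have BBJ := fun t => @bb_blk a lam l k c d.+1 t H (ltnW lk2).
rewrite addnS -/j (expnS 2 d) in BBJ.
have M3 := hM3 H (ltnW lj).
have lamj := hlam H (ltnW lj).
have mM : a (2^j - 1) < a (2^j) by apply: (hinc H); lia.
have mlj : a (2^l - 1) <= a (2^j - 1) by apply: hm_mono H _; lia.
have [Wp Wn] := hW d H lk2 lc cS. rewrite -/j in Wp Wn.
rewrite eJ in h1 h2.
case: (eqVneq n.+1 (2^j.+1)) => en.
  have En : n = 2^j + (2^j - 1) by lia.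
  have bn : bb a k c n = a (2^j) + a (2^j - 1) + c * 2 ^ d by rewrite En BB; lia.
  have bn1 : bb a k c n.+1 = 3 * a (2^j) + 2 * (c * 2 ^ d).
    rewrite en -[2^j.+1]addn0 BBJ ?(ha0 H) ?M3; [lia|apply: pow_pos].
  rewrite bn in hz1; rewrite bn1 in hz2.
  case: (ltnP z (a (2^j) + c * 2 ^ d + a (2^j))) => hz3.
    set w := z - (a (2^j) + c * 2 ^ d).
    have w1 : a (2^j - 1) < w by lia.
    have w2 : w < a (2^j) by lia.
    have wn : forall i, a i <> w.
      apply: (notT_between (n := 2^j - 1) H w1); by have -> : (2^j - 1).+1 = 2^j by lia.
    have [p [q [pq E]]] := hcov H (leq_ltn_trans mlj w1) wn.
    have apq := hinc H pq.
    have qj : q < 2^j by apply: (hlt H); lia.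
    exists (2^j + p), (2^j + q); split; [lia|lia|].
    rewrite !BB; lia.
  case: (leqP (c * 2 ^ d) (z - (a (2^j) + c * 2 ^ d + a (2^j)))) => hs.
    have hw : z - (a (2^j) + c * 2 ^ d + a (2^j)) - c * 2 ^ d < a (2^j) by lia.
    have [u [p [hu hp E]]] := Wp _ hw.
    exists p, (2^j + u); split; [lia|lia|].
    rewrite BB //; lia.
  have hr0 : 0 < c * 2 ^ d - (z - (a (2^j) + c * 2 ^ d + a (2^j))) by lia.
  have hr1 : c * 2 ^ d - (z - (a (2^j) + c * 2 ^ d + a (2^j))) <= c * 2 ^ d by lia.
  have [u [p [hu hp E]]] := Wn _ hr0 hr1.
  exists p, (2^j + u); split; [lia|lia|].
  rewrite BB //; lia.
have En : n = 2^j.+1 + (n - 2^j.+1) by lia.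
set s := n - 2^j.+1 in En.
have hs : s.+1 < 2^j.+1 by rewrite powS in h2 *; lia.
have En1 : n.+1 = 2^j.+1 + s.+1 by lia.
have bn : bb a k c n = a (2^j.+1) + a s + 2 * (c * 2 ^ d) by rewrite En BBJ; lia.
have bn1 : bb a k c n.+1 = a (2^j.+1) + a s.+1 + 2 * (c * 2 ^ d) by rewrite En1 BBJ; lia.
rewrite bn in hz1; rewrite bn1 in hz2.
set MJ := a (2^j.+1) in bn bn1 hz1 hz2 M3.
set w := z - (MJ + 2 * (c * 2 ^ d)).
have w1 : a s < w by lia.
have w2 : w < a s.+1 by lia.
have wn := notT_between H w1 w2.
have lJ : l <= j.+1 by lia.
case: (ltnP (a (2^l - 1)) w) => hw.
  have [p [q [pq E]]] := hcov H hw wn.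
  have apq := hinc H pq.
  have qs : q < s.+1 by apply: (hlt H); lia.
  exists (2^j.+1 + p), (2^j.+1 + q); split; [lia|lia|].
  rewrite !BBJ; [lia|lia|lia].
have mlJ : a (2^l - 1) <= a (2^j.+1 - 1) by apply: hm_mono H _; lia.
have nz := hnotin_blk H lJ (leq_trans hw mlJ) wn.
have hzT : a (2^l - 1) < a (2^j.+1) + w.
  have : a (2^j.+1 - 1) < a (2^j.+1) by apply: (hinc H); have := pow_pos j.+1; lia.
  lia.
have [p [q [pq E]]] := hcov H hzT nz.
have apq := hinc H pq.
have mS := hmS H (ltnW lj).
have lamJ := hlam H lJ.
case: (ltnP q (2^j.+1)) => hq.
  have qj : 2^j <= q.
    case: (ltnP q (2^j)) => // hq2.
    have : a q <= a (2^j - 1) by apply: (hlee H); lia.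
    lia.
  have aqJ : a q <= a (2^j.+1 - 1) by apply: (hlee H); lia.
  have pk : p < 2^k.
    apply: (hlt H).
    have : a (2^l - 1) < a (2^k).
      apply: (hinc H); have := pow_pos l; lia.
    have := hlam_le H. lia.
  have [q' Eq] : exists q', q = 2^j + q' by exists (q - 2^j); lia.
  have hq' : q' < 2^j by lia.
  have wE : w = z - (MJ + 2 * (c * 2 ^ d)) by [].
  exists p, q; split; [done|lia|].
  rewrite [bb a k c p]bb_low // Eq BB //.
  move: E; rewrite Eq (hblk H (ltnW lj) hq').
  lia.
have hq2 : q < 2^j.+2 - 1.
  apply: (hlt H); rewrite (hmS H lJ); lia.
have psJ := powS j.+1.
have [q' Eq] : exists q', q = 2^j.+1 + q' by exists (q - 2^j.+1); lia.
have hq' : q' < 2^j.+1 by lia.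
have wE : w = z - (MJ + 2 * (c * 2 ^ d)) by [].
move: E; rewrite Eq (hblk H lJ hq').
case: (ltnP p (2^j.+1)) => hp E.
  have : a p <= a (2^j.+1 - 1) by apply: (hlee H); lia.
  have := hmlarge H (_ : l < j.+1). lia.
have [p' Ep] : exists p', p = 2^j.+1 + p' by exists (p - 2^j.+1); lia.
have hp' : p' < 2^j.+1 by lia.
move: E apq; rewrite Ep Eq !(hblk H lJ) //.
move=> E apq.
have aqs : q' < s.+1 by apply: (hlt H); lia.
exists (2^j.+1 + p'), (2^j.+1 + q'); split; [lia|lia|].
rewrite !BBJ; [lia|lia|lia]. Qed.


Lemma pmemP (a : nat -> nat) N x : x \in Defs.prefix a N -> exists i, i < N /\ x = a i.
Proof. by case/mapP => i; rewrite mem_iota add0n => /andP [_ h] ->; exists i. Qed.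

Lemma pmemI (a : nat -> nat) N i : i < N -> a i \in Defs.prefix a N.
Proof. by move=> h; apply: map_f; rewrite mem_iota add0n h. Qed.

Lemma st_inc A a : stanley A a -> forall i j, i < j -> a i < a j.
Proof. case=> uA _ _ Hn Hg.
suff step : forall n, a n < a n.+1.
  move=> i j; elim: j => // j IH; rewrite ltnS leq_eqVlt => /orP [/eqP->//|/IH h].
  exact: ltn_trans h (step j).
move=> n; case: (leqP (size A) n.+1) => h; first by case: (Hg n h).
rewrite (Hn n (ltn_trans (ltnSn n) h)) (Hn n.+1 h).
have so : sorted ltn (sort leq A).
  by rewrite ltn_sorted_uniq_leq sort_uniq uA sort_sorted //; apply: leq_total.
apply: (sorted_ltn_nth ltn_trans 0 so); rewrite ?inE ?size_sort //; lia. Qed.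

Lemma st_free A a : stanley A a -> forall p q r, p < q -> q < r -> a p + a r <> 2 * a q.
Proof. move=> S p q r pq qr; have inc := st_inc S.
case: S => _ _ _ _ Hg.
have hs : size A <= (r + size A).+1 by lia.
have [_ F _] := Hg (r + size A) hs.
apply: F; try apply: pmemI; try lia; by apply: inc. Qed.

Lemma st_cover A a n z : stanley A a -> size A <= n.+1 -> a n < z -> z < a n.+1 ->
  exists p q, p < q /\ 2 * a q = z + a p.
Proof. move=> S sn h1 h2.
have inc := st_inc S. have fr := st_free S.
case: S => _ _ _ _ Hg. have [_ _ G] := Hg n sn.
apply: NNPP => Hno; apply: (G z h1 h2) => x y w.
rewrite !mem_rcons => Hx Hy Hw xy yw E; rewrite in_cons in Hx; rewrite in_cons in Hy; rewrite in_cons in Hw.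
have hle : forall i, i < n.+1 -> a i <= a n.
  move=> i; rewrite ltnS leq_eqVlt => /orP [/eqP->//|/inc]; lia.
have hw := Hw; have hy := Hy; have hx := Hx.
case/orP: Hw => [/eqP ew | Hw].
  case/orP: Hy => [/eqP ey | Hy]; first lia.
  have [q [hq eq]] := pmemP Hy.
  case/orP: Hx => [/eqP ex | Hx]; first lia.
  have [p [hp ep]] := pmemP Hx.
  apply: Hno; exists p, q; split; last lia.
  case: (ltnP p q) => // qp; have : a q <= a p.
    by move: qp; rewrite leq_eqVlt => /orP [/eqP->//|/inc]; lia.
  lia.
have [r [hr er]] := pmemP Hw.
have := hle r hr.
case/orP: Hy => [/eqP ey | Hy]; first lia.
have [q [hq eq]] := pmemP Hy.
case/orP: Hx => [/eqP ex | Hx]; first lia.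
have [p [hp ep]] := pmemP Hx.
move=> _.
have lt_inv : forall i j, a i < a j -> i < j.
  move=> i j hij; case: (ltnP i j) => // ji.
  have : a j <= a i by move: ji; rewrite leq_eqVlt => /orP [/eqP->//|/inc]; lia.
  lia.
apply: (fr p q r); [apply: lt_inv; lia | apply: lt_inv; lia | lia]. Qed.

Lemma st_a0 A a : stanley A a -> a 0 = 0. Proof. by case. Qed.

Lemma hloc' (a : nat -> nat) : (forall i j, i < j -> a i < a j) -> a 0 = 0 ->
  forall z, exists n, a n <= z < a n.+1.
Proof. move=> inc a0 z.
have ge : forall n, n <= a n.
  elim=> [|n IH]; first lia. have := inc n n.+1 (ltnSn n); lia.
suff: forall N, z < a N -> exists n, a n <= z < a n.+1.
  move=> /(_ z.+1) HN; apply: HN; have := ge z.+1; lia.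
elim=> [|N IH]; first by rewrite a0.
case: (ltnP z (a N)) => [/IH//|h1 h2]; by exists N; apply/andP. Qed.

Lemma ex_minimal A a : stanley A a -> exists A', minimal_nucleating a A'.
Proof. move=> S.
suff: forall n B, size B <= n -> stanley B a -> exists A', minimal_nucleating a A'.
  by move/(_ (size A) A (leqnn _) S).
elim=> [|n IH] B hB SB.
  exists B; split => // B' _; lia.
case: (classic (exists B', stanley B' a /\ size B' < size B)) => [[B' [SB' h]]|hn].
  apply: (IH B') => //; lia.
exists B; split => // B' SB'; case: (leqP (size B) (size B')) => // h.
by exfalso; apply: hn; exists B'. Qed.

Lemma getHyp A a lam l : stanley A a -> min_adequate a lam l -> HypT a lam l.
Proof. move=> S [[Hind Hnot] _].
have inc := st_inc S.
have [A' MA'] := ex_minimal S.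
have SA' := MA'.1.
have hsz : size A' <= 2^l.
  case: (leqP (size A') (2^l)) => // h; exfalso.
  move: (Hnot A' MA'); apply/negP/negPn.
  case: SA' => _ _ _ Hn _; rewrite (Hn _ h) -(mem_sort leq) mem_nth // size_sort //.
split => //.
- by case: S.
- exact: st_free S.
- move=> z hz hn.
  have [n /andP [h1 h2]] := hloc' inc (st_a0 S) z.
  have h3 : a n < z by rewrite ltn_neqAle h1 andbT; apply/eqP; apply: hn.
  have sn : size A' <= n.+1.
    case: (leqP (size A') n.+1) => // h; exfalso.
    have : a n.+1 <= a (2^l - 1).
      have : n.+1 <= 2^l - 1 by lia.
      rewrite leq_eqVlt => /orP [/eqP->//|/inc]; lia.
    lia.
  exact: st_cover SA' sn h3 h2.
Qed.


Lemma pref_free (f : nat -> nat) : (forall i j, i < j -> f i < f j) ->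
  (forall p q r, p < q -> q < r -> f p + f r <> 2 * f q) -> forall N, three_free (Defs.prefix f N).
Proof. move=> inc fr N x y z Hx Hy Hz xy yz E.
have [p [hp ep]] := pmemP Hx. have [q [hq eq]] := pmemP Hy. have [r [hr er]] := pmemP Hz.
have lt_inv : forall i j, f i < f j -> i < j.
  move=> i j hij; case: (ltnP i j) => // ji.
  have : f j <= f i by move: ji; rewrite leq_eqVlt => /orP [/eqP->//|/inc]; lia.
  lia.
apply: (fr p q r); [apply: lt_inv; lia | apply: lt_inv; lia | lia]. Qed.

Unset Implicit Arguments.
Theorem theorem4 (A : seq nat) (a : nat -> nat) (lam l k c : nat) :
  stanley A a ->
  independent a lam ->
  min_adequate a lam l ->
  l <= k ->
  lam <= c -> c + lam <= a (2 ^ k - 2 ^ l) ->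
  three_free (Akc a k c) /\
  exists b : nat -> nat, stanley (Akc a k c) b /\ regular_with_core b a.
Proof.
move=> S Hind Hma lk lc cS.
have H := getHyp S Hma.
have incb : forall i j, i < j -> bb a k c i < bb a k c j.
  by move=> i j; apply: (bb_inc _ _ H).
have frb := bb_free H lk lc.
have AkcE : Akc a k c = Defs.prefix (bb a k c) (2^k.+1).
  rewrite /Akc /Defs.prefix powS iotaD map_cat add0n; congr (_ ++ _).
    apply/eq_in_map => i; rewrite mem_iota add0n => /andP [_ h].
    by rewrite bb_low.
  apply/eq_in_map => i; rewrite mem_iota => /andP [h1 h2].
  rewrite /bb (@gg_lvl k 0 i); first lia.
  by rewrite addn0 powS h1 /=.
have frA : three_free (Akc a k c) by rewrite AkcE; apply: pref_free.
split => //.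
exists (bb a k c); split.
  split => //.
  - rewrite AkcE /Defs.prefix map_inj_in_uniq ?iota_uniq //.
    move=> i j _ _ e; case: (ltngtP i j) => // /incb; lia.
  - by rewrite bb_low ?(ha0 H) // pow_pos.
  - move=> i; rewrite AkcE sorted_sort; last first.
      rewrite /Defs.prefix sorted_map.
      apply: (sub_sorted _ (iota_ltn_sorted 0 _)) => x y /= /incb /ltnW //.
      exact: leq_trans.
    rewrite /Defs.prefix size_map size_iota => hi.
    by rewrite (nth_map 0) ?size_iota // nth_iota.
  - have sz : size (Defs.prefix (bb a k c) (2^k.+1)) = 2^k.+1.
      by rewrite /Defs.prefix size_map size_iota.
    move=> n; rewrite AkcE sz => hn.
    split; first exact: incb.
      exact: pref_free.
    move=> m h1 h2 Hf.
    have [p [q [pq qn E]]] := bb_cover H lk lc cS hn h1 h2.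
    have bpq := incb _ _ pq.
    apply: (Hf (bb a k c p) (bb a k c q) m); try lia.
    + rewrite mem_rcons in_cons; apply/orP; right; apply: pmemI; lia.
    + rewrite mem_rcons in_cons; apply/orP; right; apply: pmemI; lia.
    + by rewrite mem_rcons in_cons eqxx.
exists lam, 0%R; split => //.
exists k.+1 => j hj.
have sh : shifted j 0 = 2^j by rewrite /shifted GRing.subr0.
rewrite sh; split; first by rewrite GRing.subr0 ltz_nat pow_pos.
have [d ej] : exists d, j = (k + d).+1 by exists (j - k.+1); lia.
have B := fun t => @bb_blk a lam l k c d.+1 t H lk.
rewrite addnS -ej in B.
have B' := fun t => @bb_blk a lam l k c d t H lk.
split.
  move=> i hi; rewrite B //; have := B 0 (pow_pos _); rewrite addn0 (ha0 H) => ->; lia.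
have := B 0 (pow_pos _); rewrite addn0 (ha0 H) => ->.
have pd := pow_pos (k + d).
have e1 : 2^j - 1 = 2^(k+d) + (2^(k+d) - 1) by rewrite ej powS; lia.
rewrite e1 B'; last lia.
have lkd : l <= k + d by lia.
have hl : l <= j by lia.
have := hlam H hl; rewrite ej (hmS H lkd).
rewrite !expnS; lia.
Qed.
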